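(* Let $G$ be a graph whose adjacency spectrum contains exactly two eigenvalues (counted with multiplicity) different from $2$ and $-1$, namely $r>2$ and $s<-1$. Then: (i) one connected component of $G$ has all its vertices of degree at least $3$, and all other connected components are isomorphic to $K_3$; (ii) if $u,v$ are distinct non-adjacent vertices such that every neighbor of $u$ is also a neighbor of $v$, then $d_v-d_u\geq 5$.
   Context: Graphs are finite and simple; eigenvalues are those of the adjacency matrix; $d_v$ denotes the degree of vertex $v$. *)

(* Defs.v *)
From mathcomp Require Import all_boot all_order all_algebra.
Set Implicit Arguments. Unset Strict Implicit. Unset Printing Implicit Defensive.
Import Order.TTheory GRing.Theory Num.Theory.
Local Open Scope ring_scope.

(* A finite simple graph on the vertex set 'I_n is a symmetric irreflexive
   relation e : rel 'I_n (these properties are hypotheses of the theorem). *)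

Definition adjmx (R : nzRingType) (n : nat) (e : rel 'I_n) : 'M[R]_n :=
  \matrix_(i < n, j < n) (e i j)%:R.

Definition deg (n : nat) (e : rel 'I_n) (v : 'I_n) : nat := #|[set w | e v w]|.

Definition component (n : nat) (e : rel 'I_n) (v : 'I_n) : {set 'I_n} :=
  [set w | connect e v w].

(* A set of vertices induces a K_3 (used for components, which are induced). *)
Definition is_K3 (n : nat) (e : rel 'I_n) (C : {set 'I_n}) : Prop :=
  #|C| = 3%N /\ (forall x y, x \in C -> y \in C -> x != y -> e x y).

(* Main.v *)
Require Import Defs.
From mathcomp Require Import all_boot all_order all_algebra.
From mathcomp Require Import ring lra.
Import Order.TTheory GRing.Theory Num.Theory.
Local Open Scope ring_scope.
Set Implicit Arguments. Unset Strict Implicit. Unset Printing Implicit Defensive.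


Definition nrm2 (R : rcfType) m (y : 'rV[R]_m) := \sum_j y 0 j ^+ 2.
Definition qf (R : rcfType) m (x : 'rV[R]_m) (N : 'M[R]_m) := (x *m N *m x^T) 0 0.

Lemma nrm2_ge0 (R : rcfType) m (y : 'rV[R]_m) : 0 <= nrm2 y.
Proof. by apply: sumr_ge0 => j _; rewrite sqr_ge0. Qed.

Lemma nrm2_eq0 (R : rcfType) m (y : 'rV[R]_m) : nrm2 y = 0 -> y = 0.
Proof.
move=> /eqP; rewrite psumr_eq0; last by move=> j _; rewrite sqr_ge0.
move=> /allP H; apply/rowP => j; rewrite mxE.
by have := H j (mem_index_enum j); rewrite sqrf_eq0 => /eqP.
Qed.

Lemma nrm2E (R : rcfType) m (y : 'rV[R]_m) : nrm2 y = (y *m y^T) 0 0.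
Proof. by rewrite mxE; apply: eq_bigr => j _; rewrite mxE expr2. Qed.

Lemma qf_sq (R : rcfType) m (x : 'rV[R]_m) (N : 'M[R]_m) :
  N^T = N -> qf x (N *m N) = nrm2 (x *m N).
Proof.
move=> HN; rewrite nrm2E /qf trmx_mul HN !mulmxA; done.
Qed.

Lemma qfD (R : rcfType) m (x : 'rV[R]_m) (N N' : 'M[R]_m) :
  qf x (N + N') = qf x N + qf x N'.
Proof. by rewrite /qf mulmxDr mulmxDl mxE. Qed.

Lemma qfZ (R : rcfType) m (x : 'rV[R]_m) (N : 'M[R]_m) c :
  qf x (c *: N) = c * qf x N.
Proof. by rewrite /qf -scalemxAr -scalemxAl mxE. Qed.

Lemma qf_delta (R : rcfType) m (w : 'I_m) (N : 'M[R]_m) :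
  qf (delta_mx 0 w) N = N w w.
Proof. by rewrite /qf trmx_delta -rowE -colE !mxE. Qed.

Lemma sym_sq0 (R : rcfType) m (N : 'M[R]_m) : N^T = N -> N *m N = 0 -> N = 0.
Proof.
move=> HN H0; apply/matrixP => i j; rewrite mxE.
have NE k l : N k l = N l k by rewrite -{1}HN mxE.
have : (N *m N) i i = 0 by rewrite H0 mxE.
rewrite mxE (eq_bigr (fun k => N i k ^+ 2)); last by move=> k _; rewrite (NE k i) expr2.
move=> /eqP; rewrite psumr_eq0; last by move=> k _; rewrite sqr_ge0.
move=> /allP/(_ j (mem_index_enum j)).
by rewrite sqrf_eq0 => /eqP.
Qed.


Lemma hm_tr (R : rcfType) m (A : 'M[R]_m.+1) (p : {poly R}) :
  A^T = A -> (horner_mx A p)^T = horner_mx A p.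
Proof.
move=> HA; elim/poly_ind: p => [|p c IH]; first by rewrite rmorph0 trmx0.
rewrite rmorphD rmorphM /= horner_mx_X horner_mx_C linearD /= tr_scalar_mx.
suff -> : (horner_mx A p * A)^T = horner_mx A p * A by [].
rewrite -mulmxE trmx_mul IH HA mulmxE.
exact: (comm_mx_horner p (erefl : comm_mx A A)).
Qed.

Lemma hm_step (R : rcfType) m (A : 'M[R]_m.+1) (q h : {poly R}) k :
  A^T = A -> horner_mx A (q ^+ k.+2 * h) = 0 -> horner_mx A (q ^+ k.+1 * h) = 0.
Proof.
move=> HA H; apply: sym_sq0; first exact: hm_tr.
rewrite mulmxE -rmorphM /=.
have -> : q ^+ k.+1 * h * (q ^+ k.+1 * h) = q ^+ k.+2 * h * (q ^+ k * h).
  by rewrite !exprS; ring.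
by rewrite rmorphM /= H mul0r.
Qed.

Lemma hm_reduce (R : rcfType) m (A : 'M[R]_m.+1) (q h : {poly R}) k :
  A^T = A -> horner_mx A (q ^+ k * h) = 0 -> horner_mx A (q * h) = 0.
Proof.
move=> HA; elim: k => [|k IH].
  by rewrite expr0 mul1r => H; rewrite rmorphM /= H mulr0.
case: k IH => [|k] IH H; first by rewrite expr1 in H.
exact/IH/hm_step.
Qed.

Lemma hm_eq (R : rcfType) m (A : 'M[R]_m.+1) (rs : seq R) (f g : {poly R}) :
  uniq rs -> horner_mx A (\prod_(z <- rs) ('X - z%:P)) = 0 ->
  (forall x, x \in rs -> f.[x] = g.[x]) -> horner_mx A f = horner_mx A g.
Proof.
move=> Hu H0 Hfg; apply/eqP; rewrite -subr_eq0 -rmorphB /=.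
have : (\prod_(z <- rs) ('X - z%:P)) %| (f - g).
  apply: uniq_roots_dvdp; last by rewrite uniq_rootsE.
  by apply/allP => x Hx; rewrite /root hornerD hornerN Hfg // subrr.
move=> /dvdpP [q ->]; by rewrite rmorphM /= H0 mulr0.
Qed.


Lemma prod_if2 (R : comRingType) (c : R) n : (2 <= n)%N ->
  \prod_(i < n) (if (i < 2)%N then c else 1) = c ^+ 2.
Proof.
elim: n => [//|n IH] Hn.
case: n IH Hn => [//|[|n]] IH Hn.
  by rewrite !big_ord_recl big_ord0 /= mulr1 expr2.
by rewrite big_ord_recr /= IH // mulr1.
Qed.

Lemma geo_alg (R : rcfType) n (A : 'M[R]_n) (r : R) (W : 'M[R]_(2, n)) :
  \rank W = 2%N -> W *m A = r *: W ->
  exists c : R, exists Q : {poly R}, c != 0 /\ c%:P * char_poly A = ('X - r%:P) ^+ 2 * Q.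
Proof.
move=> HW HWA.
have le2 : (2 <= n)%N by rewrite -HW rank_leq_col.
set U := row_ebase W.
have HV : (pid_mx 2 *m U : 'M_(2, n)) = invmx (col_ebase W) *m W.
  by rewrite -{2}(mulmx_ebase W) HW -!mulmxA mulKmx // col_ebase_unit.
have Hrow : forall i : 'I_n, (i < 2)%N -> row i U *m A = r *: row i U.
  move=> i Hi.
  have -> : row i U = row (Ordinal Hi) (pid_mx 2 *m U).
    rewrite (pid_mxErow _ le2) mul_rowsub_mx mul1mx row_rowsub.
    by congr row; apply: val_inj.
  rewrite -row_mul HV -mulmxA HWA -scalemxAr; apply/rowP => j; by rewrite !mxE.
have HU : forall (i : 'I_n) j, (i < 2)%N -> (U *m A) i j = r * U i j.
  move=> i j Hi; have := congr1 (fun M : 'rV[R]_n => M 0 j) (Hrow i Hi) => /=.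
  by rewrite -row_mul !mxE.
pose P := map_mx polyC U.
pose d := \row_(i < n) (if (i < 2)%N then 'X - r%:P else 1 : {poly R}).
pose Q := \matrix_(i < n, j < n) (if (i < 2)%N then P i j else (P *m char_poly_mx A) i j).
have E : P *m char_poly_mx A = 'X *: P - map_mx polyC (U *m A).
  by rewrite /char_poly_mx mulmxBr mul_mx_scalar map_mxM.
have HPQ : P *m char_poly_mx A = diag_mx d *m Q.
  rewrite mul_diag_mx; apply/matrixP => i j; rewrite [in RHS]mxE.
  rewrite [d 0 i]mxE [Q i j]mxE.
  case: ifP => Hi; last by rewrite mul1r.
  rewrite E 2!mxE [in X in _ + X]mxE [in X in _ + X]mxE HU // /P /=  mxE.
  by rewrite polyCM; ring.
exists (\det U), (\det Q); split.
  by rewrite -unitfE -unitmxE row_ebase_unit.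
have := congr1 determinant HPQ.
rewrite !det_mulmx det_map_mx det_diag => ->; congr (_ * _).
rewrite (eq_bigr (fun i : 'I_n => if (i < 2)%N then 'X - r%:P else 1)); last by move=> i _; rewrite mxE.
exact: prod_if2.
Qed.


Lemma dep2 (R : rcfType) n (A : 'M[R]_n) (r : R) (w1 w2 : 'rV[R]_n) :
  w1 *m A = r *: w1 -> w2 *m A = r *: w2 ->
  (forall (c : R) (Q : {poly R}), c != 0 -> c%:P * char_poly A = ('X - r%:P) ^+ 2 * Q -> False) ->
  exists al be : R, (al != 0 \/ be != 0) /\ al *: w1 + be *: w2 = 0.
Proof.
move=> H1 H2 Hs.
pose W := col_mx w1 w2.
case: (boolP (row_free W)) => HF.
  have HW : \rank W = 2%N by apply/eqP.
  have HWA : W *m A = r *: W by rewrite mul_col_mx H1 H2 scale_col_mx.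
  have [c [Q [Hc HQ]]] := geo_alg HW HWA.
  by case: (Hs c Q Hc HQ).
move: HF; rewrite -kermx_eq0 => /rowV0Pn [v /sub_kermxP Hv Hv0].
exists (lsubmx v 0 0), (rsubmx v 0 0); split.
  apply/orP; apply: contraR Hv0; rewrite negb_or !negbK => /andP [/eqP H1' /eqP H2'].
  rewrite -(hsubmxK v) (mx11_scalar (lsubmx v)) (mx11_scalar (rsubmx v)) H1' H2'.
  by rewrite !raddf0 row_mx0.
move: Hv; rewrite -(hsubmxK v) mul_row_col (mx11_scalar (lsubmx v)) (mx11_scalar (rsubmx v)).
by rewrite !mul_scalar_mx row_mxKl row_mxKr !mxE /= !mulr1n.
Qed.


Definition rts (R : rcfType) (r s : R) : seq R := [:: 2; -1; r; s].
Definition p4 (R : rcfType) (r s : R) : {poly R} := \prod_(z <- rts r s) ('X - z%:P).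
Definition Lr (R : rcfType) (r s : R) : {poly R} :=
  ((r - 2) * (r + 1) * (r - s))^-1%:P * (('X - 2%:P) * ('X - (-1)%:P) * ('X - s%:P)).
Definition Ls (R : rcfType) (r s : R) : {poly R} :=
  ((s - 2) * (s + 1) * (s - r))^-1%:P * (('X - 2%:P) * ('X - (-1)%:P) * ('X - r%:P)).
Definition Lm (R : rcfType) (r s : R) : {poly R} :=
  ((-1 - 2) * (-1 - r) * (-1 - s))^-1%:P * (('X - 2%:P) * ('X - r%:P) * ('X - s%:P)).

Lemma rts_uniq (R : rcfType) (r s : R) : 2 < r -> s < -1 -> uniq (rts r s).
Proof.
move=> Hr Hs; rewrite /rts /= !inE !negb_or.
have h1 : (2 : R) != -1 by apply/eqP => H; lra.
have h2 : (2 : R) != r by apply/eqP => H; lra.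
have h3 : (2 : R) != s by apply/eqP => H; lra.
have h4 : (-1 : R) != r by apply/eqP => H; lra.
have h5 : (-1 : R) != s by apply/eqP => H; lra.
have h6 : r != s by apply/eqP => H; lra.
by rewrite h1 h2 h3 h4 h5 h6.
Qed.

Lemma rts_cases (R : rcfType) (r s : R) (P : R -> Prop) :
  P 2 -> P (-1) -> P r -> P s -> forall x, x \in rts r s -> P x.
Proof. by move=> ? ? ? ? x; rewrite !inE => /or4P [] /eqP ->. Qed.

Lemma I1 (R : rcfType) m (A : 'M[R]_m.+1) (r s : R) : 2 < r -> s < -1 ->
  horner_mx A (p4 r s) = 0 ->
  horner_mx A (('X - 2%:P) * ('X - (-1)%:P)) =
    ((r - 2) * (r + 1)) *: (horner_mx A (Lr r s) *m horner_mx A (Lr r s)) +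
    ((s - 2) * (s + 1)) *: (horner_mx A (Ls r s) *m horner_mx A (Ls r s)).
Proof.
move=> Hr Hs H0.
have a1 : r - 2 != 0 by apply/eqP => H; lra.
have a2 : r + 1 != 0 by apply/eqP => H; lra.
have a3 : r - s != 0 by apply/eqP => H; lra.
have a4 : s - 2 != 0 by apply/eqP => H; lra.
have a5 : s + 1 != 0 by apply/eqP => H; lra.
have a6 : s - r != 0 by apply/eqP => H; lra.
rewrite !mulmxE -!mul_scalar_mx !mulmxE -!(horner_mx_C A) -!rmorphM -rmorphD /=.
apply: (hm_eq (rts_uniq Hr Hs) H0); apply: rts_cases; rewrite /Lr /Ls !(hornerM, hornerD, hornerC, hornerXsubC, hornerX, hornerN); field; by rewrite ?a1 ?a2 ?a3 ?a4 ?a5 ?a6.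
Qed.

Lemma I2 (R : rcfType) m (A : 'M[R]_m.+1) (r s : R) : 2 < r -> s < -1 ->
  horner_mx A (p4 r s) = 0 ->
  2%:M - A =
    3 *: (horner_mx A (Lm r s) *m horner_mx A (Lm r s)) +
    (2 - r) *: (horner_mx A (Lr r s) *m horner_mx A (Lr r s)) +
    (2 - s) *: (horner_mx A (Ls r s) *m horner_mx A (Ls r s)).
Proof.
move=> Hr Hs H0.
have a1 : r - 2 != 0 by apply/eqP => H; lra.
have a2 : r + 1 != 0 by apply/eqP => H; lra.
have a3 : r - s != 0 by apply/eqP => H; lra.
have a4 : s - 2 != 0 by apply/eqP => H; lra.
have a5 : s + 1 != 0 by apply/eqP => H; lra.
have a6 : s - r != 0 by apply/eqP => H; lra.
have a7 : -1 - r != 0 by apply/eqP => H; lra.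
have a8 : -1 - s != 0 by apply/eqP => H; lra.
have a9 : -1 - 2 != 0 :> R by apply/eqP => H; lra.
rewrite !mulmxE -!mul_scalar_mx !mulmxE -!(horner_mx_C A) -{2}(horner_mx_X A).
rewrite -!rmorphM -!rmorphB -!rmorphD /=.
apply: (hm_eq (rts_uniq Hr Hs) H0); apply: rts_cases; rewrite /Lr /Ls /Lm !(hornerM, hornerD, hornerC, hornerXsubC, hornerX, hornerN); field; by rewrite ?a1 ?a2 ?a3 ?a4 ?a5 ?a6 ?a7 ?a8 ?a9.
Qed.

Lemma I3 (R : rcfType) m (A : 'M[R]_m.+1) (r s : R) : 2 < r -> s < -1 ->
  horner_mx A (p4 r s) = 0 ->
  horner_mx A (Lr r s) *m A = r *: horner_mx A (Lr r s).
Proof.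
move=> Hr Hs H0.
have a1 : r - 2 != 0 by apply/eqP => H; lra.
have a2 : r + 1 != 0 by apply/eqP => H; lra.
have a3 : r - s != 0 by apply/eqP => H; lra.
rewrite mulmxE -mul_scalar_mx mulmxE -!(horner_mx_C A) -{2}(horner_mx_X A).
rewrite -!rmorphM /=.
apply: (hm_eq (rts_uniq Hr Hs) H0); apply: rts_cases; rewrite /Lr !(hornerM, hornerD, hornerC, hornerXsubC, hornerX, hornerN); field; by rewrite ?a1 ?a2 ?a3.
Qed.

Lemma minpoly4 (R : rcfType) m (A : 'M[R]_m.+1) (r s : R) a b :
  A^T = A ->
  char_poly A = ('X - 2%:P) ^+ a * ('X - (-1)%:P) ^+ b * ('X - r%:P) * ('X - s%:P) ->
  horner_mx A (p4 r s) = 0.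
Proof.
move=> HA Hc; have := Cayley_Hamilton A; rewrite Hc.
rewrite -!mulrA => /(hm_reduce HA).
rewrite mulrCA => /(hm_reduce HA).
rewrite /p4 /rts !big_cons big_nil mulr1.
by rewrite mulrCA.
Qed.

Lemma hmM (R : rcfType) m (A : 'M[R]_m.+1) :
  horner_mx A (('X - 2%:P) * ('X - (-1)%:P)) = (A - 2%:M) *m (A - (-1)%:M).
Proof. by rewrite rmorphM !rmorphB /= horner_mx_X !horner_mx_C mulmxE. Qed.

Lemma Mpsd (R : rcfType) m (A : 'M[R]_m.+1) (r s : R) : A^T = A -> 2 < r -> s < -1 ->
  horner_mx A (p4 r s) = 0 -> forall x,
  0 <= qf x ((A - 2%:M) *m (A - (-1)%:M)) /\
  (qf x ((A - 2%:M) *m (A - (-1)%:M)) = 0 -> x *m ((A - 2%:M) *m (A - (-1)%:M)) = 0).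
Proof.
move=> HA Hr Hs H0 x; rewrite -hmM (I1 Hr Hs H0) !qfD !qfZ !qf_sq ?hm_tr //.
have m1 : 0 < (r - 2) * (r + 1) by apply: mulr_gt0; lra.
have m2 : 0 < (s - 2) * (s + 1) by nra.
have n1 := nrm2_ge0 (x *m horner_mx A (Lr r s)).
have n2 := nrm2_ge0 (x *m horner_mx A (Ls r s)).
split; first by nra.
move=> Hq.
have e1 : nrm2 (x *m horner_mx A (Lr r s)) = 0 by nra.
have e2 : nrm2 (x *m horner_mx A (Ls r s)) = 0 by nra.
rewrite mulmxDr -!scalemxAr !mulmxA (nrm2_eq0 e1) (nrm2_eq0 e2) !mul0mx.
by rewrite !scaler0 addr0.
Qed.

Lemma Rayg (R : rcfType) m (A : 'M[R]_m.+1) (r s : R) : A^T = A -> 2 < r -> s < -1 ->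
  horner_mx A (p4 r s) = 0 -> forall z, z *m horner_mx A (Lr r s) = 0 ->
  0 <= qf z (2%:M - A).
Proof.
move=> HA Hr Hs H0 z Hz; rewrite (I2 Hr Hs H0) !qfD !qfZ !qf_sq ?hm_tr // Hz.
have n1 := nrm2_ge0 (z *m horner_mx A (Lm r s)).
have n2 := nrm2_ge0 (z *m horner_mx A (Ls r s)).
have -> : nrm2 (0 : 'rV[R]_m.+1) = 0 by rewrite /nrm2 big1 // => j _; rewrite mxE expr0n.
nra.
Qed.

Definition common n (e : rel 'I_n) i j := #|[pred k | e i k && e k j]|.

Lemma path_closed n (e : rel 'I_n) (S : {set 'I_n}) :
  (forall x y, x \in S -> e x y -> y \in S) ->
  forall p a, path e a p -> a \in S -> last a p \in S.
Proof.
move=> Hc; elim => [|y p IH] a //= /andP [Hay Hp] Ha.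
by apply: IH => //; apply: Hc Hay.
Qed.

Lemma comp_closed n (e : rel 'I_n) (S : {set 'I_n}) w :
  (forall x y, x \in S -> e x y -> y \in S) -> w \in S ->
  forall x, x \in component e w -> x \in S.
Proof.
move=> Hc Hw x; rewrite inE => /connectP [p Hp ->].
exact: (path_closed Hc Hp Hw).


Qed.

Lemma tri n (e : rel 'I_n) (e_sym : symmetric e) (e_irr : irreflexive e) w :
  deg e w = 2%N -> (forall x, x != w -> common e w x = e w x) ->
  is_K3 e (component e w) /\ (forall x, x \in component e w -> (deg e x <= 2)%N).
Proof.
move=> Hd Hc.
set N := [set y | e w y].
have HN : #|N| = 2%N by [].
set S := w |: N.
have Hclos : forall x y, x \in S -> e x y -> y \in S.
  move=> x y; rewrite !inE => /orP [/eqP -> | Hwx] Hxy; first by rewrite Hxy orbT.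
  case: (eqVneq y w) => [// | Hyw].
  apply/orP; right; move: (Hc y Hyw).
  have : (0 < common e w y)%N by apply/card_gt0P; exists x; rewrite !inE Hwx Hxy.
  by case: (e w y) => // /[swap] ->.
have HS : component e w = S.
  apply/setP => x; apply/idP/idP => Hx.
    by apply: (comp_closed Hclos) Hx; rewrite !inE eqxx.
  rewrite inE; move: Hx; rewrite !inE => /orP [/eqP -> | Hwx]; first exact: connect0.
  exact: connect1.
have wN : w \notin N by rewrite inE e_irr.
have HS3 : #|S| = 3%N by rewrite cardsU1 wN HN.
rewrite HS; split; last first.
  move=> x Hx.
  have : #|S| = ((x \in S) + #|S :\ x|)%N by rewrite (cardsD1 x S).
  rewrite Hx HS3 add1n => [[H2]].
  rewrite /deg H2; apply: subset_leq_card; apply/subsetP => y.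
  rewrite !inE => Hxy; apply/andP; split.
    by apply: contraTneq Hxy => ->; rewrite e_irr.
  by move: (Hclos x y Hx Hxy); rewrite !inE.
split => // x y Hx Hy Hxy.
move: Hx Hy; rewrite !inE => /orP [/eqP Hx | Hx] /orP [/eqP Hy | Hy].
- by rewrite Hx Hy eqxx in Hxy.
- by rewrite Hx.
- by rewrite Hy e_sym.
have Hxw : x != w by apply: contraTneq Hx => ->; rewrite e_irr.
have : (0 < common e w x)%N by rewrite Hc // Hx.
move=> /card_gt0P [k]; rewrite !inE => /andP [Hwk Hkx].
have HN1 : #|N :\ x| = 1%N.
  have : #|N| = ((x \in N) + #|N :\ x|)%N by rewrite (cardsD1 x N).
  by rewrite HN inE Hx add1n => [[]].
have /cards1P [z Hz] : #|N :\ x| == 1%N by rewrite HN1.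
have Hky : k = y.
  have Hk : k \in N :\ x.
    rewrite !inE Hwk andbT; apply: contraTneq Hkx => ->; by rewrite e_irr.
  have Hy' : y \in N :\ x by rewrite !inE Hy andbT eq_sym.
  by move: Hk Hy'; rewrite Hz !inE => /eqP -> /eqP ->.
by rewrite -Hky e_sym.
Qed.

Lemma card_sumR (R : rcfType) m (P : pred 'I_m) : (#|P|%:R : R) = \sum_j (P j)%:R.
Proof.
rewrite -sum1_card natr_sum big_mkcond /=; apply: eq_bigr => j _.
by rewrite unfold_in; case: (P j).
Qed.

Lemma adj_tr (R : rcfType) n (e : rel 'I_n) : symmetric e -> (adjmx R e)^T = adjmx R e.
Proof. by move=> es; apply/matrixP => i j; rewrite !mxE es. Qed.

Lemma adj2E (R : rcfType) n (e : rel 'I_n) i j :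
  (adjmx R e *m adjmx R e) i j = (common e i j)%:R.
Proof.
rewrite mxE /common card_sumR; apply: eq_bigr => k _.
by rewrite !mxE -natrM mulnb.
Qed.

Lemma degE n (e : rel 'I_n) (e_sym : symmetric e) v : deg e v = common e v v.
Proof. by apply: eq_card => k; rewrite !inE (e_sym k v) andbb. Qed.

Lemma deg_sum (R : rcfType) n (e : rel 'I_n) v : ((deg e v)%:R : R) = \sum_j (e v j)%:R.
Proof.
rewrite /deg -sum1_card natr_sum big_mkcond /=; apply: eq_bigr => j _.
by rewrite inE; case: (e v j).
Qed.

Lemma ME (R : rcfType) n (e : rel 'I_n) i j :
  ((adjmx R e - 2%:M) *m (adjmx R e - (-1)%:M)) i j =
  (common e i j)%:R - (e i j)%:R - 2 *+ (i == j).
Proof.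
have -> : (adjmx R e - 2%:M) *m (adjmx R e - (-1)%:M) =
    adjmx R e *m adjmx R e - adjmx R e - 2%:M.
  rewrite mulmxBr !mulmxBl !mul_mx_scalar !mul_scalar_mx.
  by apply/matrixP => i' j'; rewrite !mxE; case: (i' == j'); rewrite /= ?mulr1n ?mulr0n; ring.
rewrite -adj2E !mxE.
by case: (i == j); rewrite /= ?mulr1n ?mulr0n.
Qed.

Lemma deg_ge2 (R : rcfType) n (e : rel 'I_n.+1) (e_sym : symmetric e) (e_irr : irreflexive e)
  (r s : R) : 2 < r -> s < -1 -> horner_mx (adjmx R e) (p4 r s) = 0 ->
  forall w, (2 <= deg e w)%N.
Proof.
move=> Hr Hs H0 w.
have [H _] := Mpsd (adj_tr R e_sym) Hr Hs H0 (delta_mx 0 w).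
move: H; rewrite qf_delta ME e_irr eqxx -degE // /= mulr1n subr0 subr_ge0.
by rewrite ler_nat.
Qed.

Lemma deg2_row (R : rcfType) n (e : rel 'I_n.+1) (e_sym : symmetric e) (e_irr : irreflexive e)
  (r s : R) : 2 < r -> s < -1 -> horner_mx (adjmx R e) (p4 r s) = 0 ->
  forall w, deg e w = 2%N -> forall x, x != w -> common e w x = e w x.
Proof.
move=> Hr Hs H0 w Hw x Hx.
have [_ H] := Mpsd (adj_tr R e_sym) Hr Hs H0 (delta_mx 0 w).
have := H; rewrite qf_delta ME e_irr eqxx -degE // Hw /= mulr1n subr0 subrr => /(_ erefl).
move=> /(congr1 (fun M : 'rV[R]_n.+1 => M 0 x)); rewrite -rowE mxE ME mxE eq_sym (negPf Hx).
rewrite /= mulr0n subr0 => /eqP; rewrite subr_eq0 eqr_nat => /eqP.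
by case: (e w x).
Qed.

Lemma exists3 (R : rcfType) n (e : rel 'I_n.+1) (e_sym : symmetric e) (e_irr : irreflexive e)
  (r s : R) : 2 < r -> s < -1 -> horner_mx (adjmx R e) (p4 r s) = 0 ->
  root (char_poly (adjmx R e)) r ->
  exists x0, (3 <= deg e x0)%N.
Proof.
move=> Hr Hs H0 Hroot.
case: (boolP [exists x, (3 <= deg e x)%N]) => [/existsP [x Hx] | Hno]; first by exists x.
exfalso.
have HM : (adjmx R e - 2%:M) *m (adjmx R e - (-1)%:M) = 0.
  apply/row_matrixP => w; rewrite row0.
  have Hw : deg e w = 2%N.
    apply/eqP; rewrite eqn_leq (deg_ge2 e_sym e_irr Hr Hs H0) andbT.
    by move: Hno; rewrite negb_exists => /forallP /(_ w); rewrite -ltnNge ltnS.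
  have [_ H] := Mpsd (adj_tr R e_sym) Hr Hs H0 (delta_mx 0 w).
  rewrite rowE; apply: H.
  by rewrite qf_delta ME e_irr eqxx -degE // Hw /= mulr1n subr0 subrr.
move: Hroot; rewrite -eigenvalue_root_char => /eigenvalueP [v Hv Hv0].
have : v *m ((adjmx R e - 2%:M) *m (adjmx R e - (-1)%:M)) = ((r - 2) * (r + 1)) *: v.
  have Hc : forall c, v *m (adjmx R e - c%:M) = (r - c) *: v.
    by move=> c; rewrite mulmxBr Hv mul_mx_scalar scalerBl.
  by rewrite mulmxA Hc -scalemxAl Hc scalerA opprK mulrC.
rewrite HM mulmx0 => /esym /eqP; rewrite scaler_eq0 (negPf Hv0) orbF.
have : (r - 2) * (r + 1) != 0 by rewrite mulf_neq0 //; apply/eqP => H; lra.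
by move=> /negPf ->.
Qed.

Lemma ray (R : rcfType) n (e : rel 'I_n.+1) (e_sym : symmetric e) (e_irr : irreflexive e)
  (r s : R) : 2 < r -> s < -1 -> horner_mx (adjmx R e) (p4 r s) = 0 ->
  forall z : 'rV[R]_n.+1, (forall i j, e i j -> z 0 i = z 0 j) ->
  z *m horner_mx (adjmx R e) (Lr r s) = 0 ->
  (forall i, z 0 i != 0 -> (3 <= deg e i)%N) -> z = 0.
Proof.
move=> Hr Hs H0 z Hc Hz Hd.
have H := Rayg (adj_tr R e_sym) Hr Hs H0 Hz.
have zA : forall i, (z *m adjmx R e) 0 i = z 0 i * (deg e i)%:R.
  move=> i; rewrite mxE deg_sum mulr_sumr; apply: eq_bigr => j _.
  rewrite mxE e_sym; case Hij: (e i j); first by rewrite (Hc i j Hij) /= mulr1.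
  by rewrite /= !mulr0.
have Hq : qf z (2%:M - adjmx R e) = 2 * nrm2 z - \sum_i z 0 i * (deg e i)%:R * z 0 i.
  have -> : 2%:M - adjmx R e = 2 *: 1%:M + (-1) *: adjmx R e.
    by rewrite scale_scalar_mx mulr1 scaleN1r.
  rewrite qfD !qfZ /qf mulmx1 -nrm2E mulN1r; congr (_ - _).
  by rewrite mxE; apply: eq_bigr => i _; rewrite zA mxE.
have Hb : 3 * nrm2 z <= \sum_i z 0 i * (deg e i)%:R * z 0 i.
  rewrite /nrm2 mulr_sumr; apply: ler_sum => i _.
  case: (eqVneq (z 0 i) 0) => [-> | Hi]; first by rewrite !mul0r expr0n /= mulr0.
  have : (3 : R) <= (deg e i)%:R by rewrite (ler_nat R 3) Hd.
  have := sqr_ge0 (z 0 i); rewrite expr2; nra.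
have n0 := nrm2_ge0 z.
apply: nrm2_eq0; rewrite Hq in H; lra.
Qed.

Lemma comp_mem n (e : rel 'I_n) (e_sym : symmetric e) c i j :
  e i j -> (i \in component e c) = (j \in component e c).
Proof.
move=> Hij; rewrite !inE; apply/idP/idP => H.
  exact: connect_trans H (connect1 Hij).
by apply: connect_trans H (connect1 _); rewrite e_sym.
Qed.

Lemma comp_sym n (e : rel 'I_n) (e_sym : symmetric e) c d :
  (c \in component e d) = (d \in component e c).
Proof. by rewrite !inE (sym_connect_sym e_sym). Qed.

Lemma uniq_comp (R : rcfType) n (e : rel 'I_n.+1) (e_sym : symmetric e) (e_irr : irreflexive e)
  (r s : R) : 2 < r -> s < -1 -> horner_mx (adjmx R e) (p4 r s) = 0 ->
  (forall (c : R) (Q : {poly R}), c != 0 ->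
     c%:P * char_poly (adjmx R e) = ('X - r%:P) ^+ 2 * Q -> False) ->
  forall c1 c2, (forall x, x \in component e c1 -> (3 <= deg e x)%N) ->
  (forall x, x \in component e c2 -> (3 <= deg e x)%N) ->
  c2 \notin component e c1 -> False.
Proof.
move=> Hr Hs H0 Hsim c1 c2 H1 H2 H12.
pose ind c := \row_(k < n.+1) ((k \in component e c)%:R : R).
pose L := horner_mx (adjmx R e) (Lr r s).
have Hw : forall c, (ind c *m L) *m adjmx R e = r *: (ind c *m L).
  by move=> c; rewrite -mulmxA /L (I3 Hr Hs H0) -scalemxAr.
have [al [be [Hab Hz]]] := dep2 (Hw c1) (Hw c2) Hsim.
pose z := al *: ind c1 + be *: ind c2.
have zE : forall i, z 0 i = al * (i \in component e c1)%:R + be * (i \in component e c2)%:R.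
  by move=> i; rewrite !mxE.
have Hz0 : z = 0.
  apply: (ray e_sym e_irr Hr Hs H0).
  - move=> i j Hij; rewrite !zE.
    by rewrite (comp_mem e_sym c1 Hij) (comp_mem e_sym c2 Hij).
  - by rewrite /z mulmxDl -!scalemxAl.
  - move=> i; rewrite zE.
    case Hi1: (i \in component e c1); first by move=> _; apply: H1.
    case Hi2: (i \in component e c2); first by move=> _; apply: H2.
    by rewrite /= !mulr0 addr0 eqxx.
have Hc1 : c1 \notin component e c2 by rewrite comp_sym.
have Hc1' : c1 \in component e c1 by rewrite inE connect0.
have Hc2' : c2 \in component e c2 by rewrite inE connect0.
have := zE c1; have := zE c2; rewrite Hz0 !mxE (negPf H12) (negPf Hc1) Hc1' Hc2'.
rewrite /= !mulr0 !mulr1 addr0 add0r => Hb Ha.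
by case: Hab; rewrite -?Ha -?Hb eqxx.
Qed.

Unset Implicit Arguments.
Set Strict Implicit.
Set Printing Implicit Defensive.

Theorem lemma2p5 (R : rcfType) (n : nat) (e : rel 'I_n)
  (e_sym : symmetric e) (e_irr : irreflexive e) (r s : R) :
  2 < r -> s < -1 ->
  (exists a b : nat,
     char_poly (adjmx R e) =
       ('X - 2%:P) ^+ a * ('X - (-1)%:P) ^+ b * ('X - r%:P) * ('X - s%:P)) ->
  (exists x0 : 'I_n,
     (forall v, v \in component e x0 -> (3 <= deg e v)%N) /\
     (forall v, v \notin component e x0 -> is_K3 e (component e v))) /\
  (forall u v : 'I_n, u != v -> ~~ e u v ->
     (forall w, e u w -> e v w) -> (deg e u + 5 <= deg e v)%N).
Proof.
move=> Hr Hs [a [b Hc]].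
have Hroot : root (char_poly (adjmx R e)) r.
  by rewrite /root Hc !(hornerM, hornerXsubC) subrr mulr0 mul0r.
case: n e e_sym e_irr Hc Hroot => [|n] e e_sym e_irr Hc Hroot.
  by move: Hroot; rewrite /root /char_poly det_mx00 hornerC oner_eq0.
have HA := adj_tr R e_sym.
have H0 := minpoly4 HA Hc.
have Hsim : forall (c : R) (Q : {poly R}), c != 0 ->
     c%:P * char_poly (adjmx R e) = ('X - r%:P) ^+ 2 * Q -> False.
  move=> c Q Hc0; rewrite Hc => HQ.
  have : (c%:P * (('X - 2%:P) ^+ a * ('X - (-1)%:P) ^+ b * ('X - s%:P))) * ('X - r%:P) =
         (('X - r%:P) * Q) * ('X - r%:P).
    transitivity (c%:P * (('X - 2%:P) ^+ a * ('X - (-1)%:P) ^+ b * ('X - r%:P) * ('X - s%:P))); first by ring.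
    by rewrite HQ; ring.
  move=> /mulIf; rewrite polyXsubC_eq0 => /(_ isT) /(congr1 (fun p => p.[r])).
  rewrite !(hornerM, hornerXsubC, hornerC, horner_exp) subrr mul0r => /eqP.
  apply/negP; rewrite !mulf_neq0 // ?expf_neq0 //; apply/eqP => H; lra.
have all3 : forall c, (3 <= deg e c)%N -> forall x, x \in component e c -> (3 <= deg e x)%N.
  move=> c Hc3 x Hx; rewrite leqNgt; apply/negP => Hx3.
  have Hx2 : deg e x = 2%N.
    by apply/eqP; rewrite eqn_leq (deg_ge2 e_sym e_irr Hr Hs H0) andbT -ltnS.
  have [_ Hle] := tri e_sym e_irr Hx2 (deg2_row e_sym e_irr Hr Hs H0 Hx2).
  have := Hle c; rewrite comp_sym // => /(_ Hx).
  by rewrite leqNgt (leq_trans _ Hc3).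
split.
  have [x0 Hx0] := exists3 e_sym e_irr Hr Hs H0 Hroot.
  exists x0; split; first exact: all3.
  move=> v Hv.
  case: (leqP 3 (deg e v)) => Hv3.
    by exfalso; apply: (uniq_comp e_sym e_irr Hr Hs H0 Hsim (all3 _ Hx0) (all3 _ Hv3) Hv).
  have Hv2 : deg e v = 2%N.
    by apply/eqP; rewrite eqn_leq (deg_ge2 e_sym e_irr Hr Hs H0) andbT -ltnS.
  by have [] := tri e_sym e_irr Hv2 (deg2_row e_sym e_irr Hr Hs H0 Hv2).
move=> u v Huv Heuv Hsub.
pose M := (adjmx R e - 2%:M) *m (adjmx R e - (-1)%:M).
have Hcuv : common e u v = deg e u.
  apply: eq_card => k; rewrite !inE; apply/idP/idP => [/andP [] // | Hk].
  by rewrite Hk e_sym Hsub.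
have Hcvu : common e v u = deg e u.
  apply: eq_card => k; rewrite !inE; apply/idP/idP => [/andP [] Hvk Huk | Hk].
    by rewrite e_sym.
  by rewrite (Hsub k Hk) /= e_sym.
pose x := delta_mx 0 v - delta_mx 0 u : 'rV[R]_n.+1.
have Hq : qf x M = M v v - M u v - M v u + M u u.
  rewrite /qf /x linearB /= !trmx_delta mulmxBl !mulmxBr -!rowE -!colE !mxE.
  by ring.
have HxM : (x *m M) 0 u = M v u - M u u.
  by rewrite /x mulmxBl -!rowE !mxE.
have [Hpsd0 Hnull0] := Mpsd HA Hr Hs H0 x.
have Hpsd : 0 <= qf x M by exact: Hpsd0.
have Hnull : qf x M = 0 -> x *m M = 0 by exact: Hnull0.
rewrite leqNgt; apply/negP => Hlt.
have Hvu : M v u = (deg e u)%:R by rewrite /M ME Hcvu e_sym (negPf Heuv) eq_sym (negPf Huv) /= mulr0n !subr0.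
have Huv' : M u v = (deg e u)%:R.
  by rewrite /M ME Hcuv (negPf Heuv) (negPf Huv) /= mulr0n !subr0.
have Hvv : M v v = (deg e v)%:R - 2 by rewrite /M ME e_irr eqxx -degE //= mulr1n subr0.
have Huu : M u u = (deg e u)%:R - 2 by rewrite /M ME e_irr eqxx -degE //= mulr1n subr0.
have Hle : ((deg e v)%:R : R) <= (deg e u)%:R + 4.
  by rewrite -(natrD R) ler_nat -ltnS -addnS.
have Hq0 : qf x M = 0.
  move: Hpsd; rewrite Hq Hvu Huv' Hvv Huu => Hpsd.
  lra.
have := congr1 (fun N : 'rV[R]_n.+1 => N 0 u) (Hnull Hq0).
rewrite /= HxM Hvu Huu mxE; lra.
Qed.
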